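(* Let $L=\ell_1$, viewed as a subset of $\ell_2$ with the $\ell_2$-norm topology, let $u\in\ell_2\setminus\ell_1$, and let $C=\operatorname{co}(L\cup\{u\})$. Then $\operatorname{icr} C=C\setminus(L\cup\{u\})\neq\emptyset$, while $L\subseteq\operatorname{fri} C$; in particular $\emptyset\neq\operatorname{icr} C\neq\operatorname{fri} C$.
   Context: $\operatorname{co}$ denotes the convex hull (set of finite convex combinations). For a convex set $C$, a convex subset $F\subseteq C$ is a face of $C$ if for every $x\in F$ and all $y,z\in C$ with $x\in(y,z)=\{(1-t)y+tz:t\in(0,1)\}$ we have $y,z\in F$; $F_{\min}(x,C)$ is the intersection of all faces of $C$ containing $x\in C$. $\operatorname{icr} C=\{x\in C:\forall y\in C\ \exists z\in C,\ x\in(y,z)\}$; $\operatorname{fri} C=\{x\in C: C\subseteq\overline{F_{\min}(x,C)}\}$. *)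

(* Defs.v *)
From Stdlib Require Import Reals List.
From Coquelicot Require Import Coquelicot.
Open Scope R_scope.

Definition seqR := nat -> R.
Definition setS := seqR -> Prop.

Definition l2 (x : seqR) : Prop := ex_series (fun n => (x n) ^ 2).
Definition l1 (x : seqR) : Prop := ex_series (fun n => Rabs (x n)).

Definition l2norm (x : seqR) : R := sqrt (Series (fun n => (x n) ^ 2)).

Definition l2closure (S : setS) : setS := fun y =>
  l2 y /\ forall eps : R, 0 < eps ->
    exists s, S s /\ l2 s /\ l2norm (fun n => y n - s n) < eps.

Definition co (S : setS) : setS := fun x =>
  exists l : list (prod R seqR),
    List.Forall (fun p => 0 <= fst p /\ S (snd p)) l /\
    List.fold_right (fun p acc => fst p + acc) 0 l = 1 /\
    forall n, x n = List.fold_right (fun p acc => fst p * snd p n + acc) 0 l.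

Definition open_seg (y z : seqR) : setS := fun x =>
  exists t, 0 < t < 1 /\ forall n, x n = (1 - t) * y n + t * z n.

Definition convex (F : setS) : Prop :=
  forall y z t, F y -> F z -> 0 <= t <= 1 ->
    F (fun n => (1 - t) * y n + t * z n).

Definition face (F C : setS) : Prop :=
  convex F /\ (forall x, F x -> C x) /\
  forall x y z, F x -> C y -> C z -> open_seg y z x -> F y /\ F z.

Definition Fmin (x : seqR) (C : setS) : setS := fun w =>
  forall F, face F C -> F x -> F w.

Definition icr (C : setS) : setS := fun x =>
  C x /\ forall y, C y -> exists z, C z /\ open_seg y z x.

Definition fri (C : setS) : setS := fun x =>
  C x /\ forall w, C w -> l2closure (Fmin x C) w.

(* Main.v *)
Require Import Defs.
From Stdlib Require Import Reals List Lra Lia.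
From Coquelicot Require Import Coquelicot.
Open Scope R_scope.

Lemma ex_series_zero : ex_series (fun _ : nat => 0).
Proof.
  exists 0. apply is_series_Reals. intros e he. exists 0%nat. intros n _.
  rewrite sum_eq_R0 by auto. unfold R_dist. rewrite Rminus_0_r, Rabs_R0. lra.
Qed.

Lemma l1_lin (a b : R) (x y : seqR) : l1 x -> l1 y -> l1 (fun n => a * x n + b * y n).
Proof.
  unfold l1; intros hx hy.
  apply (@ex_series_le R_AbsRing R_CompleteNormedModule _ (fun n => Rabs a * Rabs (x n) + Rabs b * Rabs (y n))).
  - intros n. change norm with Rabs. simpl. rewrite Rabs_Rabsolu.
    eapply Rle_trans. apply Rabs_triang. rewrite !Rabs_mult. lra.
  - apply (ex_series_plus (fun n => Rabs a * Rabs (x n)) (fun n => Rabs b * Rabs (y n))).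
    + apply (ex_series_scal (Rabs a) (fun n => Rabs (x n))); auto.
    + apply (ex_series_scal (Rabs b) (fun n => Rabs (y n))); auto.
Qed.

Lemma l2_lin (a b : R) (x y : seqR) : l2 x -> l2 y -> l2 (fun n => a * x n + b * y n).
Proof.
  unfold l2; intros hx hy.
  apply (@ex_series_le R_AbsRing R_CompleteNormedModule _ (fun n => (2 * a^2) * (x n)^2 + (2*b^2) * (y n)^2)).
  - intros n. change norm with Rabs. simpl. rewrite Rabs_pos_eq by (pose proof (pow2_ge_0 (a * x n + b * y n)); simpl in *; lra).
    pose proof (pow2_ge_0 (a * x n - b * y n)). nra.
  - apply (ex_series_plus (fun n => (2*a^2) * (x n)^2) (fun n => (2*b^2) * (y n)^2)).
    + apply (ex_series_scal (2*a^2) (fun n => (x n)^2)); auto.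
    + apply (ex_series_scal (2*b^2) (fun n => (y n)^2)); auto.
Qed.

Lemma l1_l2 (x : seqR) : l1 x -> l2 x.
Proof.
  unfold l1, l2; intros hx.
  pose proof (ex_series_lim_0 _ hx) as hl.
  apply is_lim_seq_spec in hl. simpl in hl.
  destruct (hl (mkposreal 1 Rlt_0_1)) as [N hN]. simpl in hN.
  apply (ex_series_incr_n _ N).
  apply (@ex_series_le R_AbsRing R_CompleteNormedModule _ (fun k => Rabs (x (N+k)%nat))).
  - intros k. change norm with Rabs. specialize (hN (N+k)%nat ltac:(lia)).
    rewrite Rminus_0_r, Rabs_Rabsolu in hN. revert hN.
    generalize (x (N+k)%nat). intros v hN.
    replace (v ^ 2) with (v * v) by ring. rewrite Rabs_mult.
    pose proof (Rabs_pos v). nra.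
  - apply (ex_series_incr_n _ N) in hx. exact hx.
Qed.

Lemma tail_small (f : nat -> R) : ex_series f -> forall eps, 0 < eps ->
  exists N, (0 < N)%nat /\ Series (fun k => f (N + k)%nat) < eps.
Proof.
  intros hf eps he.
  pose proof (Series_correct _ hf) as hs. apply is_series_Reals in hs.
  destruct (hs eps he) as [N hN].
  exists (S N). split. lia.
  pose proof (Series_incr_n f (S N) ltac:(lia) hf). cbn [Init.Nat.pred] in H.
  specialize (hN N ltac:(lia)). unfold R_dist in hN.
  apply Rabs_def2 in hN. lra.
Qed.

Lemma l1_ext (x y : seqR) : l1 x -> (forall n, x n = y n) -> l1 y.
Proof. unfold l1; intros hx he. eapply ex_series_ext; [|exact hx]. intros n; simpl. now rewrite he. Qed.

Lemma l2_ext (x y : seqR) : l2 x -> (forall n, x n = y n) -> l2 y.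
Proof. unfold l2; intros hx he. eapply ex_series_ext; [|exact hx]. intros n; simpl. now rewrite he. Qed.

Lemma l1_zero : l1 (fun _ => 0).
Proof. unfold l1. eapply ex_series_ext; [|exact ex_series_zero]. intros n; simpl. now rewrite Rabs_R0. Qed.

Definition W (l : list (prod R seqR)) := List.fold_right (fun p acc => fst p + acc) 0 l.
Definition V (l : list (prod R seqR)) n := List.fold_right (fun p acc => fst p * snd p n + acc) 0 l.

Lemma co_repr_gen (u : seqR) l : List.Forall (fun p => 0 <= fst p /\ (l1 (snd p) \/ snd p = u)) l ->
  exists A s, l1 A /\ 0 <= s <= W l /\ (s = W l -> forall n, A n = 0) /\ forall n, V l n = A n + s * u n.
Proof.
  induction l as [|[w pt] l IH]; intros hF.
  - exists (fun _ => 0), 0. split; [exact l1_zero|]. split; [simpl; lra|]. split; [auto|].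
    intros n; simpl. ring.
  - inversion hF as [|? ? [hw hpt] hl]; subst. simpl in hw, hpt.
    destruct (IH hl) as [A [s [hA [hs [hs1 hV]]]]].
    assert (0 <= W l) by lra.
    destruct hpt as [hpt | hpt].
    + exists (fun n => w * pt n + A n), s. split.
      { apply (l1_ext (fun n => w * pt n + 1 * A n)); [apply l1_lin; auto | intros; ring]. }
      split; [simpl; lra|]. split.
      * simpl. intros he n. assert (w = 0) by lra. assert (s = W l) by lra.
        rewrite (hs1 H1 n). subst w. ring.
      * intros n. unfold V in *. simpl. rewrite hV. ring.
    + subst pt. exists A, (w + s). split; [auto|]. split; [simpl; lra|]. split.
      * simpl. intros he. apply hs1. lra.
      * intros n. unfold V in *. simpl. rewrite hV. ring.
Qed.

Lemma co_repr (u x : seqR) : co (fun x => l1 x \/ x = u) x ->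
  exists A s, l1 A /\ 0 <= s <= 1 /\ (s = 1 -> forall n, A n = 0) /\ forall n, x n = A n + s * u n.
Proof.
  intros [l [hF [hW hx]]].
  destruct (co_repr_gen u l hF) as [A [s [hA [hs [hs1 hV]]]]].
  fold (W l) in hW. rewrite hW in hs, hs1.
  exists A, s. repeat split; auto; try lra. intros n. rewrite hx. apply hV.
Qed.

Lemma co_intro (u z A : seqR) (s : R) : l1 A -> 0 <= s < 1 -> (forall n, z n = A n + s * u n) ->
  co (fun x => l1 x \/ x = u) z.
Proof.
  intros hA hs hz.
  exists ((1 - s, fun n => A n / (1 - s)) :: (s, u) :: nil). split.
  - constructor. { simpl. split; [lra|]. left.
      apply (l1_ext (fun n => (/(1-s)) * A n + 0 * A n)); [apply l1_lin; auto|].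
      intros; unfold Rdiv; ring. }
    constructor. { simpl. split; [lra|]. now right. } constructor.
  - split. { simpl. ring. } intros n. simpl. rewrite hz. field. lra.
Qed.

Lemma co_u (u : seqR) : co (fun x => l1 x \/ x = u) u.
Proof.
  exists ((1, u) :: nil). split.
  - constructor; [simpl; split; [lra| now right]| constructor].
  - split; [simpl; ring|]. intros n; simpl; ring.
Qed.

Lemma Fmin_l1 (u x b : seqR) : l1 x -> l1 b -> Fmin x (co (fun x => l1 x \/ x = u)) b.
Proof.
  intros hx hb F [_ [_ hF]] hFx.
  assert (H := hF x b (fun n => 2 * x n - b n) hFx).
  apply H.
  - apply (co_intro u b b 0); [auto|lra|intros; ring].
  - apply (co_intro u _ (fun n => 2 * x n - b n) 0); [|lra|intros; ring].
    apply (l1_ext (fun n => 2 * x n + (-1) * b n)); [apply l1_lin; auto|intros; ring].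
  - exists (1/2). split; [lra|]. intros n. field.
Qed.

From Stdlib Require Import FunctionalExtensionality.

Lemma icr_char (u : seqR) (hu1 : ~ l1 u) x :
  icr (co (fun x => l1 x \/ x = u)) x <-> (co (fun x => l1 x \/ x = u) x /\ ~ l1 x /\ x <> u).
Proof.
  split.
  - intros [hC hi]. split; [auto|]. split.
    + intros hx. destruct (hi u (co_u u)) as [z [hz [t [ht hxe]]]].
      destruct (co_repr u z hz) as [A [r [hA [hr [_ hzA]]]]].
      apply hu1.
      apply (l1_ext (fun n => (/(1 - t + t*r)) * x n + (- t / (1 - t + t*r)) * A n)).
      { apply l1_lin; auto. }
      intros n. rewrite hxe, hzA. field. nra.
    + intros hx. subst x.
      assert (h0 : co (fun x => l1 x \/ x = u) (fun _ => 0)).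
      { apply (co_intro u _ (fun _ => 0) 0 l1_zero); [lra| intros; ring]. }
      destruct (hi (fun _ => 0) h0)
        as [z [hz [t [ht hxe]]]].
      destruct (co_repr u z hz) as [A [r [hA [hr [_ hzA]]]]].
      apply hu1.
      apply (l1_ext (fun n => (t / (1 - t * r)) * A n + 0 * A n)).
      { apply l1_lin; auto. }
      intros n. assert (E : u n = t * A n + t * r * u n) by (rewrite hxe at 1; rewrite hzA; ring).
      assert (0 < 1 - t * r) by nra.
      apply (Rmult_eq_reg_l (1 - t * r)); [|lra]. field_simplify; [|lra]. lra.
  - intros [hC [hx hxu]]. split; [auto|].
    destruct (co_repr u x hC) as [A [s [hA [hs [hs1 hxA]]]]].
    assert (s <> 0).
    { intros e; subst s. apply hx. apply (l1_ext A); auto. intros n; rewrite hxA; ring. }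
    assert (s <> 1).
    { intros e. apply hxu. apply functional_extensionality. intros n.
      rewrite hxA, (hs1 e n), e. ring. }
    intros y hy.
    destruct (co_repr u y hy) as [B [r [hB [hr [_ hyB]]]]].
    set (e := Rmin s (1 - s) / 2).
    assert (e1 : 0 < e) by (unfold e; pose proof (Rmin_pos s (1-s)); lra).
    assert (e2 : e <= s / 2) by (unfold e; pose proof (Rmin_l s (1-s)); lra).
    assert (e3 : e <= (1 - s) / 2) by (unfold e; pose proof (Rmin_r s (1-s)); lra).
    set (t := 1 - e).
    set (s' := (s - e * r) / t).
    assert (hs' : s' * t = s - e * r) by (unfold s', t; field; lra).
    exists (fun n => (A n - e * B n) / t + s' * u n). split.
    + apply (co_intro u _ (fun n => (A n - e * B n) / t) s').
      * apply (l1_ext (fun n => (/t) * A n + (- e / t) * B n)); [apply l1_lin; auto|].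
        intros n; unfold t; field; lra.
      * unfold t in hs'; split; nra.
      * intros; ring.
    + exists t. split; [unfold t; lra|]. intros n.
      rewrite hxA, hyB. replace (1 - t) with e by (unfold t; ring).
      apply (Rmult_eq_reg_l t); [|unfold t; lra].
      assert (Hs : s = s' * t + e * r) by lra. rewrite Hs at 1.
      field. unfold t; lra.
Qed.

Lemma fri_l1 (u : seqR) (hu2 : l2 u) x : l1 x -> fri (co (fun x => l1 x \/ x = u)) x.
Proof.
  intros hx. split.
  { apply (co_intro u x x 0); [auto|lra|intros; ring]. }
  intros w hw.
  destruct (co_repr u w hw) as [A [s [hA [hs [_ hwA]]]]].
  assert (hw2 : l2 w).
  { apply (l2_ext (fun n => 1 * A n + s * u n)); [apply l2_lin; auto; apply l1_l2; auto|].
    intros n; rewrite hwA; ring. }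
  split; [auto|]. intros eps he.
  destruct (tail_small _ hw2 (eps ^ 2) ltac:(nra)) as [N [hN hT]].
  set (sN := fun n => if Compare_dec.lt_dec n N then w n else 0).
  assert (hs1 : l1 sN).
  { unfold l1. apply (ex_series_incr_n _ N).
    eapply ex_series_ext; [|exact ex_series_zero]. intros k. simpl.
    unfold sN. destruct (Compare_dec.lt_dec (N + k) N); [lia|]. now rewrite Rabs_R0. }
  exists sN. split; [apply Fmin_l1; auto|]. split; [apply l1_l2; auto|].
  set (g := fun n => (w n - sN n) ^ 2).
  assert (hgs : forall k, g (N + k)%nat = w (N + k)%nat ^ 2).
  { intros k. unfold g, sN. destruct (Compare_dec.lt_dec (N + k) N); [lia|]. ring. }
  assert (hg : ex_series g).
  { apply (ex_series_incr_n _ N). eapply ex_series_ext; [intros k; symmetry; apply hgs|].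
    apply (ex_series_incr_n (fun n => w n ^ 2) N). exact hw2. }
  unfold l2norm. fold g.
  rewrite (Series_incr_n g N hN hg).
  rewrite sum_eq_R0.
  2:{ intros n hn. unfold g, sN. destruct (Compare_dec.lt_dec n N); [ring|lia]. }
  rewrite (Series_ext _ (fun k => w (N + k)%nat ^ 2) hgs).
  set (T := Series _) in *.
  destruct (Rle_lt_dec T 0).
  - rewrite Rplus_0_l, sqrt_neg_0; auto.
  - rewrite Rplus_0_l. rewrite <- (sqrt_pow2 eps) by lra.
    apply sqrt_lt_1_alt. lra.
Qed.

Theorem mainTheorem20 (u : seqR) (hu2 : l2 u) (hu1 : ~ l1 u) :
  let L := l1 in
  let C := co (fun x => L x \/ x = u) in
  (forall x, icr C x <-> (C x /\ ~ L x /\ x <> u)) /\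
  (exists x, icr C x) /\
  (forall x, L x -> fri C x) /\
  ~ (forall x, icr C x <-> fri C x).
Proof.
  intros L C. unfold C, L. split; [|split; [|split]].
  - apply icr_char; auto.
  - exists (fun n => (1/2) * u n). apply icr_char; auto. split; [|split].
    + apply (co_intro u _ (fun _ => 0) (1/2) l1_zero); [lra|intros; ring].
    + intros h. apply hu1. apply (l1_ext (fun n => 2 * ((1/2) * u n) + 0 * ((1/2) * u n)));
        [apply l1_lin; auto| intros; field].
    + intros h. apply hu1. apply (l1_ext (fun _ => 0)); [exact l1_zero|].
      intros n. assert (E := equal_f h n). simpl in E. lra.
  - intros x hx. apply fri_l1; auto.
  - intros H. assert (h0 := fri_l1 u hu2 (fun _ => 0) l1_zero).
    apply H in h0. apply icr_char in h0; auto. destruct h0 as [_ [h _]]. exact (h l1_zero).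
Qed.
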